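(* Let $\Phi$ be a channel matrix whose rows $P^1,\dots,P^4\in\Delta^n$ are in general position, let $Q^0$ be the equidistant point from $P^1,\dots,P^4$ with barycentric coordinate $\boldsymbol\lambda^0$, and suppose $\lambda^0_1<0$, $\lambda^0_2,\lambda^0_3,\lambda^0_4\ge0$. Let $Q^1=\pi(Q^0|L(P^2,P^3,P^4))$ with barycentric coordinate $\boldsymbol\lambda^1$ about $P^1,\dots,P^4$, and suppose $\lambda^1_2,\lambda^1_3,\lambda^1_4\ge0$. Then the output distribution achieving the channel capacity is $Q^\ast=Q^1$ and the channel capacity is $C=D(P^2\|Q^1)$.
   Context: $\Delta^n=\{Q:Q_j>0,\sum_jQ_j=1\}$, $\bar\Delta^m=\{\boldsymbol\lambda:\lambda_i\ge0,\sum_i\lambda_i=1\}$; $D(Q\|Q')=\sum_jQ_j\log(Q_j/Q'_j)$. Rows are in general position if $P^2-P^1,\dots,P^m-P^1$ are linearly independent. $L(S^1,\dots,S^r)=\{\sum_i\lambda_iS^i:\sum_i\lambda_i=1\}\cap\Delta^n$; for such an affine subspace $L$, $\pi(Q'|L)$ is the unique $Q\in L$ minimizing $D(Q\|Q')$. The barycentric coordinate of $Q\in L(P^1,\dots,P^m)$ is the unique $\boldsymbol\lambda$ with $\sum_i\lambda_i=1$, $Q=\sum_i\lambda_iP^i$. The equidistant point is the unique $Q^0\in L(P^1,\dots,P^m)$ with all $D(P^i\|Q^0)$ equal. Mutual information $I(\boldsymbol\lambda,\Phi)=\sum_{i,j}\lambda_iP^i_j\log(P^i_j/Q_j)$ with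 $Q=\boldsymbol\lambda\Phi$; capacity $C=\max_{\boldsymbol\lambda\in\bar\Delta^m}I(\boldsymbol\lambda,\Phi)$; the capacity-achieving output distribution is $Q^\ast=\boldsymbol\lambda^\ast\Phi$ for a maximizer $\boldsymbol\lambda^\ast$ (unique). *)

(* Defs.v *)
From mathcomp Require Import all_boot all_order all_algebra.
From mathcomp Require Import reals exp.
Set Implicit Arguments. Unset Strict Implicit. Unset Printing Implicit Defensive.
Import Order.TTheory GRing.Theory Num.Theory.
Local Open Scope ring_scope.

Section Defs.
Variable R : realType.

Definition in_simplex (n : nat) (Q : 'I_n -> R) : Prop :=
  (forall j, 0 < Q j) /\ \sum_(j < n) Q j = 1.

Definition in_csimplex (m : nat) (l : 'I_m -> R) : Prop :=
  (forall i, 0 <= l i) /\ \sum_(i < m) l i = 1.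

Definition KL (n : nat) (Q Q' : 'I_n -> R) : R :=
  \sum_(j < n) Q j * ln (Q j / Q' j).

(* output distribution  lambda Phi  (rows of Phi are P i) *)
Definition outdist (m n : nat) (l : 'I_m -> R) (P : 'I_m -> 'I_n -> R)
  : 'I_n -> R := fun j => \sum_(i < m) l i * P i j.

(* general position: P^i - P^1 (i <> 1) linearly independent; index 0 = P^1 *)
Definition general_position (m n : nat) (P : 'I_m.+1 -> 'I_n -> R) : Prop :=
  forall c : 'I_m.+1 -> R,
    (forall j, \sum_(i < m.+1 | i != ord0) c i * (P i j - P ord0 j) = 0) ->
    forall i, i != ord0 -> c i = 0.

Definition barycentric (m n : nat) (P : 'I_m -> 'I_n -> R)
  (Q : 'I_n -> R) (l : 'I_m -> R) : Prop :=
  \sum_(i < m) l i = 1 /\ Q = outdist l P.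

Definition in_affL (m n : nat) (P : 'I_m -> 'I_n -> R) (A : pred 'I_m)
  (Q : 'I_n -> R) : Prop :=
  in_simplex Q /\
  exists l : 'I_m -> R, (forall i, ~~ A i -> l i = 0) /\
    \sum_(i < m) l i = 1 /\ Q = outdist l P.

Definition is_proj (m n : nat) (P : 'I_m -> 'I_n -> R) (A : pred 'I_m)
  (Q' Q : 'I_n -> R) : Prop :=
  in_affL P A Q /\ forall Q'', in_affL P A Q'' -> KL Q Q' <= KL Q'' Q'.

Definition equidistant (m n : nat) (P : 'I_m -> 'I_n -> R) (Q : 'I_n -> R) : Prop :=
  in_affL P predT Q /\ forall i k, KL (P i) Q = KL (P k) Q.

Definition mutinf (m n : nat) (l : 'I_m -> R) (P : 'I_m -> 'I_n -> R) : R :=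
  \sum_(i < m) \sum_(j < n) l i * P i j * ln (P i j / outdist l P j).

End Defs.

(* Main.v *)
Require Import Defs.
From mathcomp Require Import all_boot all_order all_algebra.
From mathcomp Require Import reals exp.
From mathcomp Require Import ring lra.
Import Order.TTheory GRing.Theory Num.Theory.
Local Open Scope ring_scope.

Section H.
Variable R : realType.

Lemma ln_le_sub1 (x : R) : 0 < x -> ln x <= x - 1.
Proof.
move=> x0; have := @le_ln1Dx R (x - 1).
have -> : 1 + (x - 1) = x by ring.
apply; lra.
Qed.

Lemma ln_eq_sub1 (x : R) : 0 < x -> ln x = x - 1 -> x = 1.
Proof.
move=> x0 h.
set y := Num.sqrt x.
have y0 : 0 < y by rewrite sqrtr_gt0.
have yy : y * y = x by rewrite -expr2 sqr_sqrtr // ltW.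
have hl : ln x = ln y + ln y by rewrite -yy lnM.
have hy := @ln_le_sub1 y y0.
have : (y - 1) ^+ 2 <= 0 by rewrite expr2; nra.
move=> H.
have e : (y - 1) ^+ 2 = 0 by apply/eqP; rewrite eq_le H // sqr_ge0.
move/eqP: e; rewrite sqrf_eq0 subr_eq0 => /eqP y1.
by rewrite -yy y1 mulr1.
Qed.

Lemma term_ge (a b : R) : 0 < a -> 0 < b -> a - b <= a * (ln a - ln b).
Proof.
move=> a0 b0.
have ba : 0 < b / a by rewrite divr_gt0.
have h := @ln_le_sub1 _ ba.
rewrite ln_div ?posrE // in h.
have e : a * (b / a) = b by field; rewrite gt_eqF.
nra.
Qed.

Lemma term_eq (a b : R) : 0 < a -> 0 < b -> a * (ln a - ln b) = a - b -> a = b.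
Proof.
move=> a0 b0 h.
have ba : 0 < b / a by rewrite divr_gt0.
have e : a * (b / a) = b by field; rewrite gt_eqF.
have : ln (b / a) = b / a - 1.
  rewrite ln_div ?posrE //.
  apply: (mulfI (x := a)); first by rewrite gt_eqF.
  rewrite !mulrBr !mulr1 e; lra.
move/(@ln_eq_sub1 _ ba) => h2.
by rewrite -e h2 mulr1.
Qed.

Lemma KLE n (a b : 'I_n -> R) : (forall j, 0 < a j) -> (forall j, 0 < b j) ->
  KL a b = \sum_(j < n) a j * (ln (a j) - ln (b j)).
Proof.
move=> ha hb; apply: eq_bigr => j _; by rewrite ln_div ?posrE.
Qed.

Lemma gibbs n (a b : 'I_n -> R) : (forall j, 0 < a j) -> (forall j, 0 < b j) ->
  \sum_j a j = \sum_j b j -> 0 <= KL a b.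
Proof.
move=> ha hb hs; rewrite KLE //.
have : \sum_(j < n) (a j - b j) <= \sum_(j < n) a j * (ln (a j) - ln (b j)).
  by apply: ler_sum => j _; apply: term_ge.
by rewrite sumrB hs subrr.
Qed.

Lemma gibbs_eq n (a b : 'I_n -> R) : (forall j, 0 < a j) -> (forall j, 0 < b j) ->
  \sum_j a j = \sum_j b j -> KL a b <= 0 -> a = b.
Proof.
move=> ha hb hs hk; rewrite KLE // in hk.
have h0 : \sum_(j < n) (a j * (ln (a j) - ln (b j)) - (a j - b j)) = 0.
  apply/eqP; rewrite eq_le; apply/andP; split.
    by rewrite sumrB [X in _ - X]sumrB hs subrr subr0.
  by apply: sumr_ge0 => j _; rewrite subr_ge0; apply: term_ge.
apply: boolp.funext => j.
have hge : forall i : 'I_n, true -> 0 <= a i * (ln (a i) - ln (b i)) - (a i - b i).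
  by move=> i _; rewrite subr_ge0; apply: term_ge.
have := psumr_eq0P hge h0 (i := j) isT.
move/eqP; rewrite subr_eq0 => /eqP; by apply: term_eq.
Qed.

Lemma term_up (a b c : R) : 0 < a -> 0 < b -> 0 < c ->
  a * (ln a - ln c) - b * (ln b - ln c) <=
  (a - b) * (ln b - ln c) + (a - b) + (a - b) ^+ 2 / b.
Proof.
move=> a0 b0 c0.
have ab : 0 < a / b by rewrite divr_gt0.
have h := @ln_le_sub1 _ ab.
rewrite ln_div ?posrE // in h.
have e : a * (a / b - 1) = (a - b) + (a - b) ^+ 2 / b by field; rewrite gt_eqF.
have h2 : a * (ln a - ln b) <= a * (a / b - 1) by rewrite ler_pM2l.
nra.
Qed.

Lemma zero_grad (s G K : R) : 0 < s -> 0 <= K ->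
  (forall t, - s <= t <= s -> 0 <= t * G + t ^+ 2 * K) -> G = 0.
Proof.
move=> s0 K0 h.
have K1 : 0 < K + 1 by lra.
apply/eqP; apply/negP => /negP G0.
have aG : 0 < `|G| by rewrite normr_gt0.
have [d [d0 [ds dG]]] : exists d, 0 < d /\ d <= s /\ d * (K + 1) <= `|G|.
  case: (lerP (s * (K + 1)) `|G|) => hh.
    by exists s; split => //; split.
  exists (`|G| / (K + 1)); split; first by rewrite divr_gt0.
  split; last by rewrite mulfVK // gt_eqF.
  by rewrite ler_pdivrMr //; apply: ltW.
case: (ltrgtP G 0) => hG; last by move: G0; rewrite hG eqxx.
- have := h d; rewrite ltr0_norm // in dG.
  move=> /(_ _) H; have := H ltac:(apply/andP; split; lra).
  rewrite expr2; nra.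
- have := h (- d); rewrite gtr0_norm // in dG.
  move=> /(_ _) H; have := H ltac:(apply/andP; split; lra).
  rewrite expr2; nra.
Qed.

Lemma simplex_le1 n (a : 'I_n -> R) j : in_simplex a -> a j <= 1.
Proof.
move=> [ha hs]; rewrite -hs (bigD1 j) //= lerDl.
by apply: sumr_ge0 => k _; apply: ltW.
Qed.

Lemma prod_le n (F : 'I_n -> R) j : (forall k, 0 < F k <= 1) -> \prod_k F k <= F j.
Proof.
move=> hF; rewrite (bigD1 j) //=.
have /andP [h0 h1] := hF j.
rewrite ger_pMr //; apply: prodr_ile1 => k _.
by have /andP [a b] := hF k; rewrite b ltW.
Qed.

Lemma sum_delta m (F : 'I_m -> R) i : \sum_k (k == i)%:R * F k = F i.
Proof.
rewrite (bigD1 i) //= eqxx mul1r big1 ?addr0 // => k /negbTE ->.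
by rewrite mul0r.
Qed.

Lemma outdist_pos m n (mu : 'I_m -> R) (P : 'I_m -> 'I_n -> R) :
  (forall i, in_simplex (P i)) -> in_csimplex mu -> forall j, 0 < outdist mu P j.
Proof.
move=> hP [hm hs] j; rewrite /outdist.
have hF : forall k, 0 < P k j <= 1.
  by move=> k; rewrite (hP k).1 simplex_le1.
apply: (@lt_le_trans _ _ (\sum_i mu i * \prod_k P k j)).
  by rewrite -mulr_suml hs mul1r prodr_gt0 // => k _; have /andP [] := hF k.
by apply: ler_sum => i _; apply: ler_wpM2l => //; apply: prod_le.
Qed.

Lemma outdist_sum m n (mu : 'I_m -> R) (P : 'I_m -> 'I_n -> R) :
  (forall i, in_simplex (P i)) -> \sum_i mu i = 1 -> \sum_j outdist mu P j = 1.
Proof.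
move=> hP hs; rewrite /outdist exchange_big /= -hs; apply: eq_bigr => i _.
by rewrite -mulr_sumr (hP i).2 mulr1.
Qed.

Lemma mutinf_id m n (mu : 'I_m -> R) (P : 'I_m -> 'I_n -> R) (Q : 'I_n -> R) :
  (forall i j, 0 < P i j) -> (forall j, 0 < outdist mu P j) -> (forall j, 0 < Q j) ->
  mutinf mu P = \sum_i mu i * KL (P i) Q - KL (outdist mu P) Q.
Proof.
move=> hP hO hQ.
set w := fun j => ln (outdist mu P j) - ln (Q j).
have e1 : mutinf mu P = \sum_i mu i * KL (P i) Q - \sum_i mu i * \sum_j P i j * w j.
  rewrite /mutinf -sumrB; apply: eq_bigr => i _.
  rewrite /KL -mulrBr -sumrB mulr_sumr; apply: eq_bigr => j _.
  rewrite /w !ln_div ?posrE //; ring.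
have e2 : \sum_i mu i * \sum_j P i j * w j = KL (outdist mu P) Q.
  rewrite KLE //.
  under eq_bigr do rewrite mulr_sumr.
  rewrite exchange_big /=; apply: eq_bigr => j _.
  by rewrite /outdist mulr_suml; apply: eq_bigr => i _; rewrite /w mulrA.
by rewrite e1 e2.
Qed.
End H.

Theorem theorem18 (R : realType) (n : nat) (P : 'I_4 -> 'I_n -> R)
  (Q0 Q1 : 'I_n -> R) (l0 l1 : 'I_4 -> R) :
  (forall i, in_simplex (P i)) ->
  general_position P ->
  equidistant P Q0 ->
  barycentric P Q0 l0 ->
  l0 ord0 < 0 ->
  (forall i : 'I_4, i != ord0 -> 0 <= l0 i) ->
  is_proj P (fun i : 'I_4 => i != ord0) Q0 Q1 ->
  barycentric P Q1 l1 ->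
  (forall i : 'I_4, i != ord0 -> 0 <= l1 i) ->
  (forall mu : 'I_4 -> R, in_csimplex mu -> mutinf mu P <= KL (P (@inord 3 1)) Q1) /\
  (exists lam : 'I_4 -> R, in_csimplex lam /\ mutinf lam P = KL (P (@inord 3 1)) Q1) /\
  (forall lam : 'I_4 -> R, in_csimplex lam -> mutinf lam P = KL (P (@inord 3 1)) Q1 ->
     outdist lam P = Q1).
Proof.
move=> hP hgp [[hQ0s _] heq] [hl0s hQ0] hl00 _
  [[hQ1s [l' [l'0 [l's hQ1]]]] hmin] [hl1s hQ1'] hl1.
have hQ0p : forall j, 0 < Q0 j := hQ0s.1.
have hQ1p : forall j, 0 < Q1 j := hQ1s.1.
have hPp : forall i j, 0 < P i j := fun i => (hP i).1.
have l'00 : l' ord0 = 0 by apply: l'0; rewrite eqxx.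
have l10 : l1 ord0 = 0.
  pose c := fun i => l' i - l1 i.
  have hc : forall j, \sum_(i < 4 | i != ord0) c i * (P i j - P ord0 j) = 0.
    move=> j.
    have full : \sum_(i < 4) c i * (P i j - P ord0 j) = 0.
      have -> : \sum_(i < 4) c i * (P i j - P ord0 j) =
        \sum_i l' i * P i j - \sum_i l1 i * P i j
          - (\sum_i l' i - \sum_i l1 i) * P ord0 j.
        rewrite mulrBl !mulr_suml -!sumrB; apply: eq_bigr => i _; rewrite /c; ring.
      have e1 : \sum_i l' i * P i j = Q1 j by rewrite hQ1.
      have e2 : \sum_i l1 i * P i j = Q1 j by rewrite hQ1'.
      by rewrite e1 e2 l's hl1s; ring.
    by move: full; rewrite (bigD1 ord0) //= subrr mulr0 add0r.
  have hc0 := hgp c hc.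
  have : \sum_i l1 i = \sum_i l' i by rewrite l's hl1s.
  rewrite (bigD1 ord0) //= [X in _ = X](bigD1 ord0) //= l'00 add0r.
  have -> : \sum_(i < 4 | i != ord0) l1 i = \sum_(i < 4 | i != ord0) l' i.
    apply: eq_bigr => i hi; have := hc0 i hi; rewrite /c; lra.
  lra.
have Q1le : forall j, Q1 j <= 1 by move=> j; apply: simplex_le1.
have Ple : forall i j, P i j <= 1 by move=> i j; apply: simplex_le1.
pose p := \prod_j Q1 j.
have p0 : 0 < p by apply: prodr_gt0 => j _.
have pQ : forall j, p <= Q1 j.
  by move=> j; apply: prod_le => k; rewrite hQ1p Q1le.
have sumQ1 : \sum_j Q1 j = 1 := hQ1s.2.
have grad : forall i, i != ord0 ->
    \sum_j (P i j - Q1 j) * (ln (Q1 j) - ln (Q0 j)) = 0.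
  move=> i hi.
  pose v := fun j => P i j - Q1 j.
  pose K := \sum_j v j ^+ 2 / Q1 j.
  have sv : \sum_j v j = 0 by rewrite /v sumrB (hP i).2 sumQ1 subrr.
  apply: (@zero_grad _ (p / 2) _ K).
  - by rewrite divr_gt0.
  - by apply: sumr_ge0 => j _; rewrite divr_ge0 ?sqr_ge0 // ltW.
  move=> t /andP [ht1 ht2].
  pose Qt := fun j => Q1 j + t * v j.
  have Qtp : forall j, 0 < Qt j.
    move=> j; rewrite /Qt /v.
    have := pQ j; have := Ple i j; have := hPp i j; have := hQ1p j; have := Q1le j.
    move=> a b c d e.
    have p1 : p <= 1 by apply: le_trans (pQ j) (Q1le j).
    case: (lerP 0 t) => ht; nra.
  have inL : in_affL P (fun i : 'I_4 => i != ord0) Qt.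
    split.
      split => //; rewrite /Qt big_split /= -mulr_sumr sv mulr0 addr0 //.
    exists (fun k => (1 - t) * l' k + t * (k == i)%:R); split.
      move=> k; rewrite negbK => /eqP ->; rewrite l'00 mulr0 add0r.
      by rewrite eq_sym (negbTE hi) mulr0.
    split.
      rewrite big_split /= -!mulr_sumr l's.
      have := @sum_delta R 4 (fun _ => 1) i; under eq_bigr do rewrite mulr1.
      by move=> ->; ring.
    apply: boolp.funext => j; rewrite /Qt /outdist /v.
    have -> : \sum_i0 ((1 - t) * l' i0 + t * (i0 == i)%:R) * P i0 j =
       (1 - t) * \sum_k l' k * P k j + t * \sum_k (k == i)%:R * P k j.
      rewrite !mulr_sumr -big_split /=; apply: eq_bigr => k _; ring.
    rewrite sum_delta.
    have -> : \sum_k l' k * P k j = Q1 j by rewrite hQ1.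
    ring.
  have hm := hmin _ inL.
  have up : KL Qt Q0 - KL Q1 Q0 <=
     \sum_j (t * (v j * (ln (Q1 j) - ln (Q0 j))) + t * v j + t ^+ 2 * (v j ^+ 2 / Q1 j)).
    rewrite !KLE // -sumrB; apply: ler_sum => j _.
    have := @term_up R _ _ _ (Qtp j) (hQ1p j) (hQ0p j).
    have -> : Qt j - Q1 j = t * v j by rewrite /Qt; ring.
    move/le_trans; apply; rewrite le_eqVlt; apply/orP; left; apply/eqP.
    field; by rewrite gt_eqF.
  move: up; rewrite !big_split /= -!mulr_sumr sv mulr0 addr0.
  rewrite /K /v; lra.
pose w := fun j => ln (Q1 j) - ln (Q0 j).
pose g := fun Q : 'I_n -> R => \sum_j Q j * w j.
pose d := KL Q1 Q0.
have gQ1 : g Q1 = d by rewrite /d KLE.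
have gPi : forall i, i != ord0 -> g (P i) = d.
  move=> i hi; have := grad i hi.
  under eq_bigr do rewrite mulrBl.
  by rewrite sumrB -gQ1 => /eqP; rewrite subr_eq0 => /eqP.
have KLP : forall i, KL (P i) Q1 = KL (P i) Q0 - g (P i).
  move=> i; rewrite !KLE // /g -sumrB; apply: eq_bigr => j _; rewrite /w; ring.
have gQ0 : g Q0 = \sum_i l0 i * g (P i).
  rewrite {1}hQ0 /g /outdist.
  under eq_bigr do rewrite mulr_suml.
  rewrite exchange_big /=; apply: eq_bigr => i _.
  by rewrite mulr_sumr; apply: eq_bigr => j _; rewrite mulrA.
have gQ0n : g Q0 = - KL Q0 Q1.
  rewrite KLE // /g -sumrN; apply: eq_bigr => j _; rewrite /w; ring.
have KL01 : 0 <= KL Q0 Q1 by apply: gibbs => //; rewrite hQ0s.2 sumQ1.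
have d0 : 0 <= d by apply: gibbs => //; rewrite hQ0s.2 sumQ1.
have sl0 : 1 = l0 ord0 + \sum_(i < 4 | i != ord0) l0 i by rewrite -hl0s (bigD1 ord0).
have e3 : \sum_i l0 i * g (P i) = l0 ord0 * g (P ord0) + d * (1 - l0 ord0).
  rewrite (bigD1 ord0) //=; congr (_ + _).
  rewrite [in 1 - _]sl0 addrC addKr mulr_sumr; apply: eq_bigr => i hi.
  by rewrite gPi // mulrC.
have g0 : d <= g (P ord0) by nra.
pose E := KL (P ord0) Q0.
pose C := E - d.
have KLle : forall i, KL (P i) Q1 <= C.
  move=> i; rewrite KLP /C /E (heq i ord0).
  case: (boolP (i == ord0)) => [/eqP -> | hi]; first by lra.
  by rewrite gPi.
have KLeq : forall i, i != ord0 -> KL (P i) Q1 = C.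
  by move=> i hi; rewrite KLP /C /E (heq i ord0) gPi.
have i1 : (@inord 3 1) != ord0 by rewrite -val_eqE /= inordK.
rewrite (KLeq _ i1).
have main : forall mu : 'I_4 -> R, in_csimplex mu ->
    mutinf mu P <= C - KL (outdist mu P) Q1.
  move=> mu hmu.
  rewrite (@mutinf_id R 4 n mu P Q1) //; last by apply: outdist_pos.
  rewrite lerD2r.
  have -> : C = \sum_i mu i * C by rewrite -mulr_suml hmu.2 mul1r.
  by apply: ler_sum => i _; apply: ler_wpM2l; [apply: hmu.1 | apply: KLle].
have KLmu : forall mu : 'I_4 -> R, in_csimplex mu -> 0 <= KL (outdist mu P) Q1.
  move=> mu hmu; apply: gibbs => //; first by apply: outdist_pos.
  by rewrite outdist_sum ?sumQ1 // hmu.2.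
split.
  move=> mu hmu; have := main mu hmu; have := KLmu mu hmu; lra.
split.
  exists l1; split.
    split => // i; case: (boolP (i == ord0)) => [/eqP -> | hi]; first by rewrite l10.
    by apply: hl1.
  rewrite (@mutinf_id R 4 n l1 P Q1) //; last by rewrite -hQ1'.
  rewrite -hQ1'.
  have -> : KL Q1 Q1 = 0 by rewrite KLE // big1 // => j _; rewrite subrr mulr0.
  rewrite subr0 (bigD1 ord0) //= l10 mul0r add0r.
  have sl1 : 1 = \sum_(i < 4 | i != ord0) l1 i by rewrite -hl1s (bigD1 ord0) //= l10 add0r.
  rewrite -[RHS]mulr1 [in RHS]sl1 mulr_sumr; apply: eq_bigr => i hi.
  by rewrite KLeq // mulrC.
move=> lam hlam hI.
apply: gibbs_eq => //; first by apply: outdist_pos.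
  by rewrite outdist_sum ?sumQ1 // hlam.2.
have := main lam hlam; lra.
Qed.
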